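(* Let $X$ be a real Hausdorff locally convex topological vector space and let $f,g:X\to\overline{\mathbb R}$ be proper, convex and lower semicontinuous. Let $U\subseteq\operatorname{dom} f\cap\operatorname{dom} g$ be segment-dense in $\operatorname{dom} f\cap\operatorname{dom} g$ and suppose $f(u)=g(u)$ for all $u\in U$. Then $f=g$ on $\operatorname{dom} f\cap\operatorname{dom} g$.
   Context: $\overline{\mathbb R}=\mathbb R\cup\{\pm\infty\}$; $\operatorname{dom} f=\{x:f(x)<+\infty\}$; proper: $\operatorname{dom} f\ne\emptyset$ and $f>-\infty$. $[x,y]=\{x+t(y-x):t\in[0,1]\}$. Definition (segment-dense): for a convex set $V$ and $U\subseteq V$, $U$ is segment-dense in $V$ if for each $x\in V$ there exists $y\in U$ such that $x$ is a cluster point of $[x,y]\cap U$. *)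

(* Defs.v *)
From Stdlib Require Import Reals.
Open Scope R_scope.

Record LCTVS := {
  car :> Type;
  vadd : car -> car -> car;
  vscal : R -> car -> car;
  vzero : car;
  vopp : car -> car;
  vadd_assoc : forall x y z, vadd x (vadd y z) = vadd (vadd x y) z;
  vadd_comm : forall x y, vadd x y = vadd y x;
  vadd_0 : forall x, vadd x vzero = x;
  vadd_opp : forall x, vadd x (vopp x) = vzero;
  vscal_assoc : forall a b x, vscal a (vscal b x) = vscal (a * b) x;
  vscal_1 : forall x, vscal 1 x = x;
  vscal_distr_v : forall a x y, vscal a (vadd x y) = vadd (vscal a x) (vscal a y);
  vscal_distr_r : forall a b x, vscal (a + b) x = vadd (vscal a x) (vscal b x);
  is_open : (car -> Prop) -> Prop;
  open_full : is_open (fun _ => True);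
  open_inter : forall A B, is_open A -> is_open B -> is_open (fun x => A x /\ B x);
  open_union : forall F : (car -> Prop) -> Prop,
      (forall A, F A -> is_open A) -> is_open (fun x => exists A, F A /\ A x);
  vadd_cont : forall x y W, is_open W -> W (vadd x y) ->
      exists A B, is_open A /\ is_open B /\ A x /\ B y /\
        forall u v, A u -> B v -> W (vadd u v);
  vscal_cont : forall a x W, is_open W -> W (vscal a x) ->
      exists eps A, 0 < eps /\ is_open A /\ A x /\
        forall b u, Rabs (b - a) < eps -> A u -> W (vscal b u);
  hausdorff : forall x y, x <> y ->
      exists A B, is_open A /\ is_open B /\ A x /\ B y /\ forall z, ~ (A z /\ B z);
  locally_convex : forall x W, is_open W -> W x ->
      exists C, is_open C /\ C x /\ (forall z, C z -> W z) /\
        forall u v t, C u -> C v -> 0 <= t <= 1 ->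
          C (vadd u (vscal t (vadd v (vopp u))))
}.

Arguments vadd {_}. Arguments vscal {_}. Arguments vopp {_}. Arguments is_open {_}.

Inductive ER := Fin (r : R) | PInf | MInf.

Definition ER_le (a b : ER) : Prop :=
  match a, b with
  | MInf, _ => True
  | _, PInf => True
  | Fin x, Fin y => x <= y
  | _, _ => False
  end.

Definition ER_lt (a b : ER) : Prop := ER_le a b /\ a <> b.

Section Fun.
Context {X : LCTVS}.

Definition segpt (x y : X) (t : R) : X := vadd x (vscal t (vadd y (vopp x))).
Definition segment (x y : X) : X -> Prop :=
  fun z => exists t, 0 <= t <= 1 /\ z = segpt x y t.

Definition dom (f : X -> ER) : X -> Prop := fun x => f x <> PInf.

Definition proper (f : X -> ER) : Prop :=
  (exists x, dom f x) /\ forall x, f x <> MInf.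

(** convexity of an extended-real function: convexity of its epigraph *)
Definition convex_fun (f : X -> ER) : Prop :=
  forall x y a b t, ER_le (f x) (Fin a) -> ER_le (f y) (Fin b) -> 0 <= t <= 1 ->
    ER_le (f (segpt x y t)) (Fin (a + t * (b - a))).

Definition lsc (f : X -> ER) : Prop :=
  forall x r, ER_lt (Fin r) (f x) ->
    exists W, is_open W /\ W x /\ forall z, W z -> ER_lt (Fin r) (f z).

Definition convex_set (V : X -> Prop) : Prop :=
  forall u v t, V u -> V v -> 0 <= t <= 1 -> V (segpt u v t).

Definition cluster_point (x : X) (S : X -> Prop) : Prop :=
  forall W, is_open W -> W x -> exists z, W z /\ S z /\ z <> x.

Definition segment_dense (U V : X -> Prop) : Prop :=
  forall x, V x -> exists y, U y /\ cluster_point x (fun z => segment x y z /\ U z).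
End Fun.

(* Main.v *)
Require Import Defs.
From Stdlib Require Import Reals.
From Stdlib Require Import Lra.
Local Open Scope R_scope.

Section V.
Variable X : LCTVS.

Lemma L1 (x z : X) : vadd (vadd x z) (vopp x) = z.
Proof. rewrite (vadd_comm X x z), <- vadd_assoc, vadd_opp, vadd_0. reflexivity. Qed.

Lemma Ldbl (u : X) : u = vadd u u -> u = vzero X.
Proof.
  intros H. pose proof (vadd_opp X u) as E.
  rewrite H in E at 1. rewrite <- vadd_assoc, vadd_opp, vadd_0 in E. exact E.
Qed.

Lemma scal_zero (t : R) : vscal t (vzero X) = vzero X.
Proof. apply Ldbl. rewrite <- vscal_distr_v, vadd_0. reflexivity. Qed.

Lemma zero_scal (v : X) : vscal 0 v = vzero X.
Proof. apply Ldbl. rewrite <- vscal_distr_r. f_equal. ring. Qed.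

Lemma scal_nz (d : R) (v : X) : d <> 0 -> vscal d v = vzero X -> v = vzero X.
Proof.
  intros Hd H. rewrite <- (vscal_1 X v). replace 1 with (/d * d) by (field; auto).
  rewrite <- vscal_assoc, H, scal_zero. reflexivity.
Qed.
End V.

Lemma half (X : LCTVS) (f g : X -> ER) :
  proper f -> lsc f ->
  proper g -> convex_fun g ->
  forall U : X -> Prop,
    (forall u, U u -> dom f u /\ dom g u) ->
    segment_dense U (fun x => dom f x /\ dom g x) ->
    (forall u, U u -> f u = g u) ->
    forall x a b, f x = Fin a -> g x = Fin b -> a <= b.
Proof.
  intros [_ pf] lf [_ pg] cg U HU SD E x a b Ha Hb.
  destruct (Rle_or_lt a b) as [|Hlt]; [assumption|exfalso].
  assert (Dx : dom f x /\ dom g x) by (unfold dom; rewrite Ha, Hb; split; discriminate).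
  destruct (SD x Dx) as [y [Uy Cl]].
  destruct (HU y Uy) as [_ Dy].
  destruct (g y) as [d| |] eqn:Gy; [|now elim Dy|now elim (pg y)].
  set (v := vadd y (vopp x)).
  assert (Hv : v <> vzero X).
  { intro Hv0. destruct (Cl _ (open_full X) I) as [z [_ [[[t [_ ->]] _] Hz]]].
    apply Hz. unfold segpt. fold v. rewrite Hv0, scal_zero, vadd_0. reflexivity. }
  set (r := (a + b) / 2).
  destruct (lf x r) as [W [OW [Wx HW]]].
  { rewrite Ha. split; [simpl; unfold r; lra|intro H; injection H; unfold r; lra]. }
  set (del := Rmin 1 ((a - b) / (2 * (Rabs (d - b) + 1)))).
  assert (Hd1 : 0 < del <= 1).
  { unfold del. pose proof (Rabs_pos (d - b)). split.
    - apply Rmin_glb_lt; [lra|]. apply Rdiv_lt_0_compat; lra.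
    - apply Rmin_l. }
  set (w := segpt x y del).
  assert (Hw : x <> w).
  { intro H. apply Hv. apply (scal_nz X del); [lra|].
    pose proof (L1 X x (vscal del v)) as L. unfold w, segpt in H. fold v in H.
    rewrite <- H, vadd_opp in L. symmetry; exact L. }
  destruct (hausdorff X x w Hw) as [A [B [OA [OB [Ax [Bw Dis]]]]]].
  destruct (locally_convex X x (fun z => W z /\ A z) (open_inter X W A OW OA) (conj Wx Ax))
    as [C [OC [Cx [CW Cc]]]].
  destruct (Cl C OC Cx) as [z [Cz [[[t [Ht ->]] Uz] Hz]]].
  assert (Ht0 : t <> 0).
  { intro H0. apply Hz. unfold segpt. rewrite H0, zero_scal, vadd_0. reflexivity. }
  destruct (Rlt_or_le t del) as [Htd|Htd].
  - pose proof (cg x y b d t) as Hc. rewrite Hb, Gy in Hc.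
    specialize (Hc (Rle_refl b) (Rle_refl d) Ht).
    destruct (CW _ Cz) as [Wz _]. specialize (HW _ Wz).
    rewrite (E _ Uz) in HW.
    assert (Hbd : b + t * (d - b) < r).
    { assert (t * (d - b) <= t * Rabs (d - b)).
      { apply Rmult_le_compat_l; [lra|apply Rle_abs]. }
      assert (t * Rabs (d - b) < (a - b) / 2).
      { assert (del <= (a - b) / (2 * (Rabs (d - b) + 1))) by apply Rmin_r.
        pose proof (Rabs_pos (d - b)).
        assert (t * (Rabs (d - b) + 1) < (a - b)/2).
        { apply Rlt_le_trans with (del * (Rabs (d-b) + 1)).
          - apply Rmult_lt_compat_r; lra.
          - apply Rle_trans with ((a - b) / (2 * (Rabs (d - b) + 1)) * (Rabs (d-b) + 1)).
            + apply Rmult_le_compat_r; lra.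
            + right. field. lra. }
        nra. }
      unfold r; lra. }
    destruct (g (segpt x y t)) as [e| |].
    + destruct HW as [H1 H2]. simpl in H1, Hc.
      assert (r <> e) by (intro; apply H2; subst; reflexivity). lra.
    + exact Hc.
    + destruct HW as [H1 _]. exact H1.
  - assert (Cw : C w).
    { pose proof (Cc x (segpt x y t) (del / t) Cx Cz) as H.
      assert (0 <= del / t <= 1).
      { split. unfold Rdiv; apply Rmult_le_pos; [lra|left; apply Rinv_0_lt_compat; lra].
        apply (Rmult_le_reg_r t); [lra|]. unfold Rdiv. rewrite Rmult_assoc, Rinv_l; lra. }
      specialize (H H0). unfold w; unfold segpt in H |- *. rewrite L1, vscal_assoc in H.
      replace (del / t * t) with del in H by (field; lra). exact H. }
    destruct (CW _ Cw) as [_ Aw]. exact (Dis w (conj Aw Bw)).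
Qed.

Theorem mainTheorem6 (X : LCTVS) (f g : X -> ER) :
  proper f -> convex_fun f -> lsc f ->
  proper g -> convex_fun g -> lsc g ->
  forall U : X -> Prop,
    (forall u, U u -> dom f u /\ dom g u) ->
    segment_dense U (fun x => dom f x /\ dom g x) ->
    (forall u, U u -> f u = g u) ->
    forall x, dom f x -> dom g x -> f x = g x.
Proof.
  intros pf cf lf pg cg lg U HU SD E x Df Dg.
  destruct (f x) as [a| |] eqn:Fa; [|now elim Df|now elim (proj2 pf x)].
  destruct (g x) as [b| |] eqn:Gb; [|now elim Dg|now elim (proj2 pg x)].
  f_equal. apply Rle_antisym.
  - exact (half X f g pf lf pg cg U HU SD E x a b Fa Gb).
  - apply (half X g f pg lg pf cf U) with (x := x); [| | | exact Gb | exact Fa].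
    + intros u Hu; destruct (HU u Hu); split; assumption.
    + intros z [H1 H2]. destruct (SD z (conj H2 H1)) as [y [Uy Cy]]. exists y; split; [assumption|]. intros W OW Wz. destruct (Cy W OW Wz) as [q [Q1 [[Q2 Q3] Q4]]]. exists q; auto.
    + intros u Hu; symmetry; auto.
Qed.
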